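(* Let $\vec H$ be a fixed oriented graph whose underlying graph $H$ is bipartite, and suppose $\vec H$ is well-oriented with respect to the bipartition $V(H)=A(H)\sqcup B(H)$, i.e. every arc of $\vec H$ goes from $A(H)$ to $B(H)$. Let \[\Delta'(H)=\min\Big\{\max_{v\in A(H)}\deg_H(v),\ \max_{v\in B(H)}\deg_H(v)\Big\}.\] Then $\mathrm{ex}(n,\vec H)=O(n^{2-1/\Delta'(H)})$.
   Context: An oriented graph is a digraph in which each pair of vertices is joined by at most one arc. $\mathrm{ex}(n,\vec H)$ is the maximum number of arcs in an $n$-vertex oriented graph that does not contain $\vec H$ as a subgraph (respecting orientations). *)

(* Defs.v *)
From mathcomp Require Import all_boot.
From Stdlib Require Import Reals.
Set Implicit Arguments. Unset Strict Implicit. Unset Printing Implicit Defensive.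

Definition oriented (T : finType) (G : rel T) : bool :=
  [forall x, ~~ G x x] && [forall x, forall y, ~~ (G x y && G y x)].

Definition narcs (T : finType) (G : rel T) : nat :=
  #|[set p : T * T | G p.1 p.2]|.

Definition contains (V T : finType) (G : rel T) (H : rel V) : bool :=
  [exists f : {ffun V -> T}, injectiveb f &&
     [forall u, forall v, H u v ==> G (f u) (f v)]].

Definition ex (V : finType) (H : rel V) (n : nat) : nat :=
  \max_(g : {ffun 'I_n * 'I_n -> bool} |
          oriented (fun x y => g (x, y)) && ~~ contains (fun x y => g (x, y)) H)
     narcs (fun x y => g (x, y)).

Definition udeg (V : finType) (H : rel V) (v : V) : nat :=
  #|[set w | H v w || H w v]|.

Definition Delta' (V : finType) (H : rel V) (A : {set V}) : nat :=
  minn (\max_(v in A) udeg H v) (\max_(v in ~: A) udeg H v).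

(* Main.v *)
Require Import Defs.
From mathcomp Require Import all_boot.
From Stdlib Require Import Reals.
From mathcomp Require Import all_boot zify.
From Stdlib Require Import Lra.
Set Implicit Arguments. Unset Strict Implicit. Unset Printing Implicit Defensive.

Definition Ns (T : finType) r (G : rel T) (s : {ffun 'I_r -> T}) : {set T} :=
  [set y | [forall i, G (s i) y]].
Definition Ut (T : finType) r (G : rel T) (t : {ffun 'I_r -> T}) : {set T} :=
  [set x | [forall i, G x (t i)]].
Definition badT (T : finType) r (G : rel T) h (U : {set T}) : {set {ffun 'I_r -> T}} :=
  [set s : {ffun 'I_r -> T} | [forall i, s i \in U] && (#|Ns G s| < h)].

Lemma card_sumb (I : finType) (A : {pred I}) : #|A| = \sum_i (i \in A).
Proof.
rewrite -sum1_card big_mkcond /=; apply: eq_bigr => i _; by case: (i \in A).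
Qed.

Lemma leq_expr m n e : m <= n -> m ^ e <= n ^ e.
Proof. case: e => [//|e] mn; by rewrite leq_exp2r. Qed.

Lemma step1 (T : finType) r (G : rel T) :
  \sum_(t : {ffun 'I_r -> T}) #|Ut G t| = \sum_x #|[set y | G x y]| ^ r.
Proof.
rewrite (eq_bigr (fun t => \sum_x (x \in Ut G t))); last by move=> t _; rewrite card_sumb.
rewrite exchange_big; apply: eq_bigr => x _.
have := @card_ffun_on 'I_r _ [set y | G x y]; rewrite card_ord => <-.
rewrite card_sumb; apply: eq_bigr => t _.
congr nat_of_bool; rewrite inE.
apply/forallP/ffun_onP => Hx i; move: (Hx i); by rewrite inE.
Qed.

Lemma step2 (T : finType) r (G : rel T) h :
  \sum_(t : {ffun 'I_r -> T}) #|badT r G h (Ut G t)| <= #|T| ^ r * h ^ r.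
Proof.
under eq_bigr do rewrite card_sumb.
rewrite exchange_big.
have -> : #|T| ^ r * h ^ r = \sum_(s : {ffun 'I_r -> T}) h ^ r.
  by rewrite sum_nat_const card_ffun card_ord.
apply: leq_sum => s _.
have -> : \sum_(t : {ffun 'I_r -> T}) (s \in badT r G h (Ut G t)) =
    #|[set t : {ffun 'I_r -> T} | s \in badT r G h (Ut G t)]|.
  by rewrite card_sumb; apply: eq_bigr => t _; rewrite inE.
case: (ltnP #|Ns G s| h) => hs; last first.
  apply: leq_trans (_ : _ <= 0) _ => //; rewrite leqn0; apply/eqP.
  apply: eq_card0 => t; rewrite !inE.
  by rewrite ltnNge hs andbF.
apply: leq_trans (_ : #|ffun_on (Ns G s)| <= _).
  apply: subset_leq_card; apply/subsetP => t; rewrite !inE => /andP [/forallP Ht _].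
  apply/ffun_onP => j; rewrite inE; apply/forallP => i.
  by move: (Ht i); rewrite inE => /forallP.
rewrite card_ffun_on card_ord; apply: leq_expr; exact: ltnW.
Qed.

Lemma removal (T : finType) r (G : rel T) h (U : {set T}) : h <= #|T| ->
  exists U' : {set T}, [/\ U' \subset U, #|U| <= #|U'| + #|badT r G h U| & badT r G h U' = set0].
Proof.
move=> hT.
move: {2}_.+1 (ltnSn #|badT r G h U|) => k; elim: k U => // k IH U hk.
case: (set_0Vmem (badT r G h U)) => [b0|[s sb]].
  by exists U; rewrite b0 cards0 addn0.
case: (posnP r) => [r0|rpos].
  exfalso; move: sb; rewrite inE => /andP [_].
  have -> : Ns G s = setT.
    apply/setP => y; rewrite !inE; apply/forallP => i; exfalso.
    by have := ltn_ord i; rewrite {2}r0.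
  by rewrite cardsT ltnNge hT.
set x := s (Ordinal rpos).
have xU : x \in U by move: sb; rewrite inE => /andP [/forallP ->].
have sub1 : badT r G h (U :\ x) \proper badT r G h U.
  apply/properP; split.
    apply/subsetP => s'; rewrite !inE => /andP [/forallP Hs ->]; rewrite andbT.
    by apply/forallP => i; move: (Hs i); rewrite inE => /andP [].
  exists s => //; rewrite !inE negb_and; apply/orP; left.
  by apply/forallPn; exists (Ordinal rpos); rewrite !inE eqxx.
have lt1 := proper_card sub1.
have hk' : #|badT r G h (U :\ x)| < k by apply: leq_trans lt1 _; rewrite -ltnS.
have [U' [U'sub hU' b0]] := IH (U :\ x) hk'.
exists U'; split => //.
  exact: subset_trans U'sub (subD1set _ _).
move: hU'; rewrite (cardsD1 x U) xU; lia.
Qed.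

Lemma good (T : finType) r (G : rel T) h (U S : {set T}) : h <= #|T| ->
  badT r G h U = set0 -> S \subset U -> #|S| <= r ->
  h <= #|[set y | [forall x in S, G x y]]|.
Proof.
move=> hT b0 SU Sr.
case: (set_0Vmem S) => [->|[x0 Sx0]].
  have -> : [set y | [forall x in set0, G x y]] = setT.
    by apply/setP => y; rewrite !inE; apply/forallP => x; rewrite inE.
  by rewrite cardsT.
pose s := [ffun i : 'I_r => nth x0 (enum S) i].
have sS : forall i, s i \in S.
  move=> i; rewrite ffunE; case: (ltnP i (size (enum S))) => hi.
    by rewrite -mem_enum; apply: mem_nth.
  by rewrite nth_default.
have : s \notin badT r G h U by rewrite b0 inE.
rewrite inE negb_and => /orP [/forallPn [i]|].
  by rewrite (subsetP SU _ (sS i)).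
rewrite -leqNgt => hN; apply: leq_trans hN (subset_leq_card _).
apply/subsetP => y; rewrite !inE => /forallP Hy; apply/forallP => x; apply/implyP => xS.
have hi : index x (enum S) < r.
  by apply: leq_trans Sr; rewrite cardE index_mem mem_enum.
by move: (Hy (Ordinal hi)); rewrite ffunE /= nth_index // mem_enum.
Qed.

Lemma cardsD_ge (T : finType) (X Y : {set T}) : #|X| - #|Y| <= #|X :\: Y|.
Proof.
rewrite cardsD; apply: leq_sub2l; apply: subset_leq_card; exact: subsetIr.
Qed.

Lemma greedy (V T : finType) (C : V -> {set T}) (F : {set T}) (t0 : T) m :
  forall k (D : {set V}), #|D| = k -> k <= m ->
  (forall v, v \in D -> m + #|F| <= #|C v|) ->
  exists g : V -> T, {in D &, injective g} /\
    forall v, v \in D -> (g v \in C v) && (g v \notin F).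
Proof.
elim=> [|k IH] D hD hkm hC.
  have D0 : D = set0 by apply/eqP; rewrite -cards_eq0 hD.
  by exists (fun _ => t0); split => [u v|v]; rewrite D0 inE.
have [d dD] : exists d, d \in D by apply/set0Pn; rewrite -card_gt0 hD.
have hD' : #|D :\ d| = k by move: hD; rewrite (cardsD1 d D) dD; lia.
have [g [ginj gC]] : exists g : V -> T, {in D :\ d &, injective g} /\
    forall v, v \in D :\ d -> (g v \in C v) && (g v \notin F).
  apply: IH hD' (ltnW hkm) _ => v; rewrite inE => /andP [_]; exact: hC.
have [y yin] : exists y, y \in (C d :\: F) :\: [set g v | v in D :\ d].
  apply/set0Pn; rewrite -card_gt0.
  have h1 := cardsD_ge (C d :\: F) [set g v | v in D :\ d].
  have h2 := cardsD_ge (C d) F.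
  have h3 : #|[set g v | v in D :\ d]| <= #|D :\ d| := leq_imset_card _ _.
  have h4 := hC d dD.
  rewrite hD' in h3; lia.
move: yin; rewrite !inE => /andP [yg /andP [yF yC]].
exists (fun v => if v == d then y else g v); split.
  move=> u v uD vD /=.
  case: (eqVneq u d) => [->|ud]; case: (eqVneq v d) => [->|vd] //.
  - move=> E; exfalso; move/negP: yg; apply; apply/imsetP; exists v => //.
    by rewrite in_setD1 vd vD.
  - move=> E; exfalso; move/negP: yg; apply; apply/imsetP; exists u => //.
    by rewrite in_setD1 ud uD.
  - by apply: ginj; rewrite in_setD1 ?ud ?vd.
move=> v vD /=; case: (eqVneq v d) => [->|vd]; first by rewrite yC.
by apply: gC; rewrite in_setD1 vd vD.
Qed.
Lemma ptw a b k : a * b ^ k + b * a ^ k <= a ^ k.+1 + b ^ k.+1.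
Proof.
rewrite !expnS.
wlog ab : a b / a <= b.
  move=> Hw; case: (leqP a b) => [|/ltnW] h; first exact: Hw.
  by rewrite addnC [a * _ + _]addnC; apply: Hw.
have XY := leq_expr k ab.
move: (a ^ k) (b ^ k) XY => X Y XY.
rewrite -(subnKC ab); move: (b - a) => c.
nia.
Qed.

Lemma cheb (I : finType) (d : I -> nat) k :
  (\sum_i d i) * (\sum_i d i ^ k) <= #|I| * \sum_i d i ^ k.+1.
Proof.
rewrite big_distrl /=.
under eq_bigr do rewrite big_distrr /=.
set P := \sum_i \sum_j _.
have PE : P = \sum_i \sum_j d j * d i ^ k.
  by rewrite /P exchange_big.
rewrite -(leq_pmul2l (isT : 0 < 2)) mulnA [2 * #|I|]mulnC -mulnA mul2n -addnn.
rewrite {1}PE /P -big_split /=.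
under eq_bigr do rewrite -big_split /=.
apply: leq_trans (_ : \sum_i \sum_j (d i ^ k.+1 + d j ^ k.+1) <= _).
  apply: leq_sum => i _; apply: leq_sum => j _; rewrite addnC; exact: ptw.
have -> : \sum_i \sum_j (d i ^ k.+1 + d j ^ k.+1) =
    \sum_i (#|I| * d i ^ k.+1 + \sum_j d j ^ k.+1).
  apply: eq_bigr => i _; rewrite big_split /=; congr (_ + _).
  by rewrite sum_nat_const mulnC.
rewrite big_split /= sum_nat_const -big_distrr /=.
rewrite mul2n -addnn mulnDr.
by rewrite cardT -cardE.
Qed.

Lemma pmean (I : finType) (d : I -> nat) k :
  (\sum_i d i) ^ k.+1 <= #|I| ^ k * \sum_i d i ^ k.+1.
Proof.
elim: k => [|k IH].
  rewrite expn0 mul1n expn1; apply: eq_leq; apply: eq_bigr => i _; by rewrite expn1.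
rewrite expnS.
apply: leq_trans (leq_mul (leqnn _) IH) _.
rewrite mulnCA [#|I| ^ k.+1]expnS [#|I| * _]mulnC -mulnA leq_mul2l.
apply/orP; right; exact: cheb.
Qed.

Lemma mainlem (T V : finType) (G : rel T) (H : rel V) (A : {set V}) r :
  (forall u v, H u v -> (u \in A) /\ (v \notin A)) ->
  (forall v, v \notin A -> #|[set u | H u v]| <= r) ->
  (2 * #|V| + (2 * #|V|) ^ r) * #|T| ^ r < \sum_x #|[set y | G x y]| ^ r ->
  contains G H.
Proof.
move=> hH hdeg hsum.
set h := 2 * #|V|.
have s1 := step1 r G.
have s2 := step2 r G h.
have [t ht] : exists t : {ffun 'I_r -> T}, h + #|badT r G h (Ut G t)| < #|Ut G t|.
  case: (pickP (fun t : {ffun 'I_r -> T} => h + #|badT r G h (Ut G t)| < #|Ut G t|)).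
    by move=> t ht; exists t.
  move=> none; exfalso.
  have : \sum_(t : {ffun 'I_r -> T}) #|Ut G t| <=
         \sum_(t : {ffun 'I_r -> T}) (h + #|badT r G h (Ut G t)|).
    by apply: leq_sum => t _; rewrite leqNgt none.
  rewrite big_split /= sum_nat_const card_ffun card_ord s1.
  move: s2 hsum; rewrite -/h.
  move: (\sum_t _) (\sum_x _) => S2 S1.
  move: (#|T| ^ r) (h ^ r) => N X; rewrite mulnDl [X * N]mulnC [h * N]mulnC; lia.
have hT : h <= #|T|.
  apply: leq_trans (_ : #|Ut G t| <= #|T|); [lia | exact: max_card].
have [U' [U'sub hU' b0]] := removal r G (Ut G t) hT.
have hU'h : h <= #|U'| by lia.
have [t0 _] : exists t0, t0 \in Ut G t.
  by apply/set0Pn; rewrite -card_gt0; lia.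
have hCA : forall v, v \in A -> #|V| + #|@set0 T| <= #|U'|.
  by move=> v _; rewrite cards0 addn0; lia.
have [f [finj fC]] := @greedy V T (fun _ => U') set0 t0 #|V| #|A| A erefl
  (max_card _) hCA.
pose C := fun v => [set y | [forall x in f @: [set u | H u v], G x y]].
have hCB : forall v, v \in ~: A -> #|V| + #|f @: A| <= #|C v|.
  move=> v; rewrite inE => vA.
  have e1 : #|f @: A| <= #|V| := leq_trans (leq_imset_card _ _) (max_card _).
  have e2 : h <= #|C v|.
    apply: (good hT b0).
      apply/subsetP => x /imsetP [u]; rewrite inE => Huv ->.
      by have [uA _] := hH u v Huv; have /andP [] := fC u uA.
    apply: leq_trans (leq_imset_card _ _) _; exact: hdeg.
  rewrite /h in e2; lia.
have [g [ginj gC]] := @greedy V T C (f @: A) t0 #|V| #|~: A| (~: A) erefl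
  (max_card _) hCB.
apply/existsP; exists [ffun v => if v \in A then f v else g v].
apply/andP; split.
  apply/injectiveP => u v; rewrite !ffunE.
  case: (boolP (u \in A)) => uA; case: (boolP (v \in A)) => vA.
  - by apply: finj.
  - move=> E; exfalso; have /andP [_] := gC v (ltac:(by rewrite inE)).
    by rewrite -E; move/negP; apply; apply/imsetP; exists u.
  - move=> E; exfalso; have /andP [_] := gC u (ltac:(by rewrite inE)).
    by rewrite E; move/negP; apply; apply/imsetP; exists v.
  - by apply: ginj; rewrite inE.
apply/forallP => u; apply/forallP => v; apply/implyP => Huv.
have [uA vA] := hH u v Huv.
rewrite !ffunE uA (negbTE vA).
have /andP [Cv _] := gC v (ltac:(by rewrite inE)).
move: Cv; rewrite inE => /forallP /(_ (f u)) /implyP; apply.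
by apply/imsetP; exists u; rewrite ?inE.
Qed.
Delimit Scope R_scope with R.

Lemma INR_muln a b : INR (muln a b) = (INR a * INR b)%R.
Proof. by rewrite -mult_INR. Qed.
Lemma INR_expn a b : INR (expn a b) = (INR a ^ b)%R.
Proof. elim: b => [|b IH]; first by rewrite expn0. by rewrite expnS INR_muln IH. Qed.

Lemma real_step (K n e r : nat) : (0 < r)%N -> (0 < n)%N -> (0 < K)%N ->
  (INR K * Rpower (INR n) (2 - / INR r) < INR e)%R ->
  (K * (n ^ r.-1 * n ^ r) < e ^ r)%N.
Proof.
case: r => // m _ n0 K0 H.
have x0 : (0 < INR n)%R by apply: lt_0_INR; apply/ltP.
have K1 : (1 <= INR K)%R by apply: (le_INR 1); apply/leP.
set P := Rpower (INR n) (2 - / INR m.+1).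
have P0 : (0 < P)%R by rewrite /P /Rpower; apply: exp_pos.
have KP0 : (0 < INR K * P)%R by apply: Rmult_lt_0_compat; lra.
have HP : (INR K * P < INR e)%R := H.
have e0 : (0 < INR e)%R by lra.
have lt1 : ((INR K * P) ^ m.+1 < INR e ^ m.+1)%R.
  rewrite -!Rpower_pow //; apply: Rlt_Rpower_l; [apply: lt_0_INR; lia | lra].
have PE : (P ^ m.+1 = INR n ^ (m + m.+1))%R.
  rewrite -Rpower_pow // /P Rpower_mult -Rpower_pow //; congr Rpower.
  rewrite plus_INR !S_INR; field.
  have := pos_INR m; lra.
have KK : (INR K <= INR K ^ m.+1)%R.
  by rewrite -{1}(pow_1 (INR K)); apply: Rle_pow => //; apply/leP.
apply/ltP; apply: INR_lt.
rewrite INR_muln INR_muln !INR_expn -pow_add /=.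
rewrite Rpow_mult_distr PE in lt1.
apply: Rle_lt_trans lt1.
apply: Rmult_le_compat_r => //.
apply: pow_le; lra.
Qed.

Lemma narcs_sum (T : finType) (G : rel T) : narcs G = \sum_x #|[set y | G x y]|.
Proof.
transitivity (\sum_x \sum_y (G x y : nat)).
  rewrite pair_big /= /narcs card_sumb; apply: eq_bigr => p _; by rewrite inE.
apply: eq_bigr => x _; rewrite card_sumb; apply: eq_bigr => y _; by rewrite inE.
Qed.

Lemma narcs_T (T : finType) (G : rel T) : narcs (fun x y => G y x) = narcs G.
Proof.
rewrite !narcs_sum.
transitivity (\sum_x \sum_y (G y x : nat)).
  apply: eq_bigr => x _; rewrite card_sumb; apply: eq_bigr => y _; by rewrite inE.
rewrite exchange_big; apply: eq_bigr => x _; rewrite card_sumb; apply: eq_bigr => y _.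
by rewrite inE.
Qed.

Lemma contains_T (T V : finType) (G : rel T) (H : rel V) :
  contains (fun x y => G y x) (fun u v => H v u) -> contains G H.
Proof.
move=> /existsP [f /andP [finj /forallP Hf]].
apply/existsP; exists f; rewrite finj /=.
apply/forallP => u; apply/forallP => v; apply/implyP => Huv.
by have /forallP /(_ u) /implyP := Hf v; apply.
Qed.

Lemma bound_key (T V : finType) (G : rel T) (H : rel V) (A : {set V}) r n :
  0 < r -> #|T| = n -> 0 < n -> 0 < #|V| ->
  (forall u v, H u v -> (u \in A) /\ (v \notin A)) ->
  (forall v, v \notin A -> #|[set u | H u v]| <= r) ->
  (INR (2 * #|V| + (2 * #|V|) ^ r) * Rpower (INR n) (2 - / INR r) < INR (narcs G))%R ->
  contains G H.
Proof.
move=> r0 Tn n0 V0 hH hdeg hlt.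
apply: (mainlem hH hdeg).
have K0 : 0 < 2 * #|V| + (2 * #|V|) ^ r by lia.
have := real_step r0 n0 K0 hlt.
have := pmean (fun x => #|[set y | G x y]|) r.-1.
rewrite prednK // -narcs_sum Tn => h1 h2.
have h3 := leq_trans h2 h1.
have np : 0 < n ^ r.-1 by rewrite expn_gt0 n0.
by rewrite mulnCA ltn_pmul2l in h3.
Qed.

Delimit Scope R_scope with R.

Theorem corollary11 (V : finType) (H : rel V) (A : {set V}) :
  oriented H ->
  (forall u v, H u v -> (u \in A) /\ (v \notin A)) ->
  (exists u v, H u v) ->
  exists C : R, (0 < C)%R /\
    exists N : nat, forall n : nat, (N <= n)%N ->
      (INR (ex H n) <= C * Rpower (INR n) (2 - / INR (Delta' H A)))%R.
Proof.
move=> _ hH [u0 [v0 H0]].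
have [u0A v0A] := hH _ _ H0.
pose a := \max_(v in A) udeg H v.
pose b := \max_(v in ~: A) udeg H v.
have a1 : (0 < a)%N.
  apply: leq_trans (leq_bigmax_cond u0 u0A).
  rewrite /udeg card_gt0; apply/set0Pn; exists v0; by rewrite inE H0.
have b1 : (0 < b)%N.
  have v0A' : v0 \in ~: A by rewrite inE.
  apply: leq_trans (leq_bigmax_cond v0 v0A').
  rewrite /udeg card_gt0; apply/set0Pn; exists u0; by rewrite inE H0 orbT.
have rE : Delta' H A = minn a b by [].
have r0 : (0 < Delta' H A)%N by rewrite rE; lia.
have V0 : (0 < #|V|)%N by apply/card_gt0P; exists u0.
have K0 : (0 < 2 * #|V| + (2 * #|V|) ^ Delta' H A)%N by lia.
exists (INR (2 * #|V| + (2 * #|V|) ^ Delta' H A)); split.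
  by apply: lt_0_INR; lia.
exists 1%N => n n1.
rewrite /ex.
apply: (big_ind (fun m => INR m <= INR (2 * #|V| + (2 * #|V|) ^ Delta' H A) *
   Rpower (INR n) (2 - / INR (Delta' H A)))%R).
- rewrite /=; apply: Rmult_le_pos; first exact: pos_INR.
  rewrite /Rpower; apply: Rlt_le; exact: exp_pos.
- by move=> x y hx hy; rewrite /maxn; case: ifP.
move=> g /andP [_ nc]; apply: Rnot_lt_le => hlt.
move/negP: nc; apply.
have n0 : (0 < n)%N by [].
case: (leqP b a) => hba.
- have rb : Delta' H A = b by rewrite rE; lia.
  apply: (bound_key r0 (card_ord n) n0 V0 hH _ hlt) => v vA.
  apply: leq_trans (_ : udeg H v <= _).
    apply: subset_leq_card; apply/subsetP => u; rewrite !inE => ->; by rewrite orbT.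
  rewrite rb; apply: leq_bigmax_cond; by rewrite inE.
- have ra : Delta' H A = a by rewrite rE; lia.
  apply: contains_T.
  have hH' : forall u v, H v u -> (u \in ~: A) /\ (v \notin ~: A).
    move=> u v Hvu; have [vA uA] := hH v u Hvu; by rewrite !inE uA vA.
  rewrite -narcs_T in hlt.
  apply: (bound_key r0 (card_ord n) n0 V0 hH' _ hlt) => v.
  rewrite inE negbK => vA.
  apply: leq_trans (_ : udeg H v <= _).
    apply: subset_leq_card; apply/subsetP => u; rewrite !inE => ->; by [].
  by rewrite ra; apply: leq_bigmax_cond.
Qed.
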